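(* Let $G$ be a graph and $(A,B)$ a $2$-separation of $G$ with $A\cap B=\{x,y\}$. Let $X=\{a,b,c,d\}\subseteq V(G)$. If $x,y\in X$, one vertex of $X$ lies in $A\setminus\{x,y\}$ and the other lies in $B\setminus\{x,y\}$, then $G$ does not have an $L(X)$-minor.
   Context: A $2$-separation is a pair $(A,B)$ with $A\cup B=V(G)$, $|A\cap B|\le2$ and no edge between $A\setminus B$ and $B\setminus A$. The graph $L$ has vertices $v_1,\dots,v_8$ and edges $v_1v_2,v_1v_5,v_2v_7,v_2v_8,v_2v_3,v_3v_4,v_4v_5,v_4v_7,v_5v_6,v_6v_7,v_6v_8,v_7v_8$. An $L$-model in $G$ is a family $\{G_z:z\in V(L)\}$ of pairwise vertex-disjoint connected subgraphs of $G$ such that for each $zz'\in E(L)$ some vertex of $G_z$ is adjacent to some vertex of $G_{z'}$. $G$ has an $L(X)$-minor if there is an $L$-model and an injective map $\pi:X\to\{v_1,v_3,v_4,v_5\}$ with $u\in V(G_{\pi(u)})$ for all $u\in X$. *)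

(* Defs.v *)
From mathcomp Require Import all_boot.
Set Implicit Arguments. Unset Strict Implicit. Unset Printing Implicit Defensive.

Definition simple_graph (V : finType) (e : rel V) : Prop :=
  symmetric e /\ irreflexive e.

Definition two_separation (V : finType) (e : rel V) (A B : {set V}) : Prop :=
  [/\ A :|: B = [set: V], #|A :&: B| <= 2 &
      forall u v, u \in A :\: B -> v \in B :\: A -> ~~ e u v].

(* A connected
   subgraph of G is determined, for the purposes of models, by its vertex set
   S, and S spans a connected subgraph iff G[S] is connected. *)
Definition connected_in (V : finType) (e : rel V) (S : {set V}) : Prop :=
  S != set0 /\
  forall u v, u \in S -> v \in S ->
    connect [rel p q | [&& e p q, p \in S & q \in S]] u v.

(* The graph L on v_1..v_8, encoded as 'I_8 with v_i = i-1. *)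
Definition L_edges : seq (nat * nat) :=
  [:: (1,2); (1,5); (2,7); (2,8); (2,3); (3,4); (4,5); (4,7); (5,6); (6,7);
      (6,8); (7,8)].

Definition Ladj (z z' : 'I_8) : bool :=
  ((z.+1, z'.+1) \in L_edges) || ((z'.+1, z.+1) \in L_edges).

Definition Lv (i : nat) : 'I_8 := inord i.-1.

Definition L_model (V : finType) (e : rel V) (M : 'I_8 -> {set V}) : Prop :=
  [/\ forall z, connected_in e (M z),
      forall z z', z != z' -> [disjoint M z & M z'] &
      forall z z', Ladj z z' ->
        exists u v, [/\ u \in M z, v \in M z' & e u v]].

Definition has_LX_minor (V : finType) (e : rel V) (X : {set V}) : Prop :=
  exists (M : 'I_8 -> {set V}) (pi : V -> 'I_8),
    [/\ L_model e M,
        {in X &, injective pi},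
        forall u, u \in X -> pi u \in [set Lv 1; Lv 3; Lv 4; Lv 5] &
        forall u, u \in X -> u \in M (pi u)].

(* Main.v *)
Require Import Defs.
From mathcomp Require Import all_boot.

Lemma Lv_val i : i < 9 -> 0 < i -> nat_of_ord (Lv i) = i.-1.
Proof. by move=> h1 h2; rewrite /Lv inordK //; case: i h1 h2. Qed.

Theorem mainTheorem19 (V : finType) (e : rel V) (A B : {set V})
    (x y : V) (X : {set V}) (u w : V) :
  simple_graph e ->
  two_separation e A B ->
  A :&: B = [set x; y] ->
  #|X| = 4 ->
  x \in X -> y \in X ->
  X :\: [set x; y] = [set u; w] ->
  u \in A :\: [set x; y] ->
  w \in B :\: [set x; y] ->
  ~ has_LX_minor e X.
Proof.
move=> [esym _] [AB _ noedge] AIB _ xX yX XD uAxy wBxy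
  [M [pi [[Mconn Mdisj Madj] pinj piT MX]]].
have uX : u \in X.
  have : u \in X :\: [set x; y] by rewrite XD !inE eqxx.
  by case/setDP.
have wX : w \in X.
  have : w \in X :\: [set x; y] by rewrite XD !inE eqxx orbT.
  by case/setDP.
move: uAxy => /setDP [uA uxy]; move: wBxy => /setDP [wB wxy].
have sideE v : v \notin [set x; y] -> (v \in B) = (v \notin A).
  move=> vn; have : v \in A :|: B by rewrite AB inE.
  rewrite inE; case vA: (v \in A); case vB: (v \in B) => //= _.
  by move: vn; rewrite -AIB inE vA vB.
have edgeA p q : p \notin [set x; y] -> q \notin [set x; y] -> e p q ->
    (p \in A) = (q \in A).
  move=> pn qn epq; case pA: (p \in A); case qA: (q \in A) => //.
    have : ~~ e p q by apply: noedge; rewrite inE ?(sideE _ pn) ?(sideE _ qn) ?pA ?qA.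
    by rewrite epq.
  have : ~~ e q p by apply: noedge; rewrite inE ?(sideE _ pn) ?(sideE _ qn) ?pA ?qA.
  by rewrite esym epq.
pose good z := (z != pi x) && (z != pi y).
have Mgood z a : good z -> a \in M z -> a \notin [set x; y].
  move=> /andP [zx zy] aM; rewrite !inE; apply/norP; split; apply/negP => /eqP ax;
    rewrite ax in aM.
    by move: (MX _ xX); rewrite (disjointFr (Mdisj _ _ zx) aM).
  by move: (MX _ yX); rewrite (disjointFr (Mdisj _ _ zy) aM).
pose R z z' := forall a b, a \in M z -> b \in M z' -> (a \in A) = (b \in A).
have Rself z : good z -> R z z.
  move=> gz a b aM bM; have [_ conn] := Mconn z.
  apply: (closed_connect _ (conn a b aM bM)).
  move=> p q /= /and3P [epq pM qM].
  exact: edgeA (Mgood _ _ gz pM) (Mgood _ _ gz qM) epq.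
have Radj z z' : good z -> good z' -> Ladj z z' -> R z z'.
  move=> gz gz' adj a b aM bM; have [p [q [pM qM epq]]] := Madj _ _ adj.
  rewrite (Rself z gz a p aM pM) (edgeA p q (Mgood _ _ gz pM) (Mgood _ _ gz' qM) epq).
  exact: (Rself z' gz' q b qM bM).
have Rtrans z1 z2 z3 : R z1 z2 -> R z2 z3 -> R z1 z3.
  move=> h1 h2 a c aM cM; have [ne _] := Mconn z2.
  have [b bM] := set0Pn _ ne; by rewrite (h1 a b) // (h2 b c).
have Rsym z z' : R z z' -> R z' z by move=> h a b aM bM; rewrite (h b a).
have goodhub h : h \notin [set Lv 1; Lv 3; Lv 4; Lv 5] -> good h.
  by move=> hT; apply/andP; split; apply/eqP => E; move: hT; rewrite E piT.
have hub t : t \in [set Lv 1; Lv 3; Lv 4; Lv 5] -> good t -> R t (Lv 7).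
  move=> tT gt.
  have g2 : good (Lv 2) by apply: goodhub; rewrite !inE -!val_eqE /= !Lv_val.
  have g6 : good (Lv 6) by apply: goodhub; rewrite !inE -!val_eqE /= !Lv_val.
  have g7 : good (Lv 7) by apply: goodhub; rewrite !inE -!val_eqE /= !Lv_val.
  move: tT; rewrite !inE -!orbA => /or4P [] /eqP tE; rewrite tE in gt *.
  - by apply: Rtrans (Radj _ _ gt g2 _) (Radj _ _ g2 g7 _); rewrite /Ladj !Lv_val.
  - by apply: Rtrans (Radj _ _ gt g2 _) (Radj _ _ g2 g7 _); rewrite /Ladj !Lv_val.
  - by apply: Radj; rewrite // /Ladj !Lv_val.
  - by apply: Rtrans (Radj _ _ gt g6 _) (Radj _ _ g6 g7 _); rewrite /Ladj !Lv_val.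
have gp v : v \in X -> v \notin [set x; y] -> good (pi v).
  move=> vX vn; apply/andP; split; apply/eqP => E.
    by move: vn; rewrite (pinj _ _ vX xX E) !inE eqxx.
  by move: vn; rewrite (pinj _ _ vX yX E) !inE eqxx orbT.
have := Rtrans _ _ _ (hub _ (piT _ uX) (gp _ uX uxy))
  (Rsym _ _ (hub _ (piT _ wX) (gp _ wX wxy))) u w (MX _ uX) (MX _ wX).
by move: wB; rewrite sideE // uA => /negbTE ->.
Qed.
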